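(* Let $0<\gamma_\ell<\gamma_{\ell+1}<\infty$ and define $$b_\ell=\frac{\log(\log_2(1+\gamma_{\ell+1}))-\log(\log_2(1+\gamma_\ell))}{\log\gamma_{\ell+1}-\log\gamma_\ell},\qquad a_\ell=e^{\log(\log_2(1+\gamma_{\ell+1}))-b_\ell\log\gamma_{\ell+1}},$$ so that $\varphi_\ell(\gamma)=a_\ell\gamma^{b_\ell}$ is the unique function of this form with $\varphi_\ell(\gamma_\ell)=\log_2(1+\gamma_\ell)$ and $\varphi_\ell(\gamma_{\ell+1})=\log_2(1+\gamma_{\ell+1})$. Then $$\varphi_\ell(\gamma)\ge\log_2(1+\gamma)\ \text{for }\gamma\in[0,\gamma_\ell],\qquad \varphi_\ell(\gamma)\le\log_2(1+\gamma)\ \text{for }\gamma\in[\gamma_\ell,\gamma_{\ell+1}],\qquad \varphi_\ell(\gamma)>\log_2(1+\gamma)\ \text{for }\gamma\in(\gamma_{\ell+1},\infty).$$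
   Context: $\log$ denotes the natural logarithm. *)

(* Defs.v *)
From HB Require Import structures.
From mathcomp Require Import all_boot all_order all_algebra.
From mathcomp Require Import all_classical all_reals all_analysis.
Set Implicit Arguments. Unset Strict Implicit. Unset Printing Implicit Defensive.
Import Order.TTheory GRing.Theory Num.Theory.
Local Open Scope ring_scope.

Definition log2 {R : realType} (x : R) : R := ln x / ln 2.

Definition b_coef {R : realType} (gl gl1 : R) : R :=
  (ln (log2 (1 + gl1)) - ln (log2 (1 + gl))) / (ln gl1 - ln gl).

Definition a_coef {R : realType} (gl gl1 : R) : R :=
  expR (ln (log2 (1 + gl1)) - b_coef gl gl1 * ln gl1).

(* phi_l(g) = a_l * g ^ b_l  (powR: 0 `^ b = 0 for b <> 0) *)
Definition phi {R : realType} (gl gl1 g : R) : R :=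
  a_coef gl gl1 * g `^ b_coef gl gl1.

(* Main.v *)
Require Import Defs.
From HB Require Import structures.
From mathcomp Require Import all_boot all_order all_algebra.
From mathcomp Require Import all_classical all_reals all_analysis.
From mathcomp Require Import ring lra.
Import Order.TTheory GRing.Theory Num.Theory.
Local Open Scope ring_scope.

Section H.
Context {R : realType}.

Lemma incr_pos (f f' : R -> R) (a b x y : R) : 0 < a ->
  (forall z : R, 0 < z -> is_derive z 1 f (f' z)) ->
  (forall z : R, a < z < b -> 0 < f' z) -> a <= x -> x < y -> y <= b -> f x < f y.
Proof.
move=> a0 D P ax xy yb.
have dv z : 0 < z -> derivable f z 1 by move=> /D [].
apply: (gtr0_derive1_incr _ _ _ ax xy yb).
- by move=> z; rewrite in_itv /= => /andP[az _]; apply: dv; exact: lt_trans a0 az.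
- move=> z; rewrite in_itv /= => /andP[az zb].
  have [_ h] := D z (lt_trans a0 az); rewrite derive1E h. by apply: P; rewrite az zb.
- apply: derivable_within_continuous => z; rewrite in_itv /= => /andP[az _].
  by apply: dv; apply: lt_le_trans a0 az.
Qed.

Lemma decr_pos (f f' : R -> R) (a b x y : R) : 0 < a ->
  (forall z : R, 0 < z -> is_derive z 1 f (f' z)) ->
  (forall z : R, a < z < b -> f' z < 0) -> a <= x -> x < y -> y <= b -> f y < f x.
Proof.
move=> a0 D P ax xy yb.
suff: - f x < - f y by rewrite ltrN2.
apply: (@incr_pos (fun z => - f z) (fun z => - f' z) a b x y a0) => //.
  by move=> z z0; exact: (is_deriveN (D z z0)).
by move=> z /P; rewrite oppr_gt0.
Qed.

Lemma dL (x : R) : -1 < x -> is_derive x 1 (fun z => @ln R (1 + z)) (1 + x)^-1.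
Proof.
move=> x1.
have h1 : is_derive x 1 (fun z : R => 1 + z) 1.
  have := is_deriveD (is_derive_cst (1:R) x 1) (is_derive_id x 1).
  by rewrite add0r.
have h2 : is_derive (1 + x) 1 (@ln R) (1 + x)^-1 by apply: is_derive1_ln; lra.
have := is_derive1_comp h2 h1.
by rewrite mulr1.
Qed.

Lemma ltln1Dx (x : R) : 0 < x -> ln (1 + x) < x.
Proof.
move=> x0; rewrite -ltr_expR lnK ?expR_gt1Dx ?gt_eqF // posrE; lra.
Qed.

Definition mf (x : R) := (1 + x) * ln (1 + x) * x^-1.

Lemma dmf (x : R) : 0 < x -> is_derive x 1 mf ((x - ln (1 + x)) / x ^+ 2).
Proof.
move=> x0.
have h1 : is_derive x 1 (fun z : R => 1 + z) 1.
  have := is_deriveD (is_derive_cst (1:R) x 1) (is_derive_id x 1).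
  by rewrite add0r.
have h2 : is_derive x 1 (fun z => @ln R (1 + z)) (1 + x)^-1 by apply: dL; lra.
have hA := is_deriveM h1 h2.
have hV := @is_deriveV R id x 1 1 (lt0r_neq0 x0) (is_derive_id x 1).
have := is_deriveM hA hV.
rewrite /mf /= => H; apply: (is_derive_eq H).
rewrite /GRing.scale /=.
have -> : (((fun z : R => 1 + z) * (fun z : R => ln (1 + z))) x) = (1 + x) * ln (1 + x) by [].
have lx : 0 < ln (1 + x) by apply: ln_gt0; lra.
field; lra.
Qed.

Lemma mf_incr (x y : R) : 0 < x -> x < y -> mf x < mf y.
Proof.
move=> x0 xy.
apply: (@incr_pos mf (fun z => (z - ln (1 + z)) / z ^+ 2) x y x y) => //.
  exact: dmf.
move=> z /andP[xz _]; have z0 : 0 < z by exact: lt_trans x0 xz.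
by apply: divr_gt0; [rewrite subr_gt0 ltln1Dx | apply: exprn_gt0].
Qed.

Lemma mf_gt0 (x : R) : 0 < x -> 0 < mf x.
Proof.
move=> x0; rewrite /mf; apply: mulr_gt0; last by rewrite invr_gt0.
apply: mulr_gt0; [lra | apply: ln_gt0; lra].
Qed.

Definition Gf (b x : R) := ln (ln (1 + x)) - b * ln x.
Definition Gd (b x : R) := (ln (1 + x))^-1 * (1 + x)^-1 - b * x^-1.

Lemma dG (b x : R) : 0 < x -> is_derive x 1 (Gf b) (Gd b x).
Proof.
move=> x0.
have h2 : is_derive x 1 (fun z => @ln R (1 + z)) (1 + x)^-1 by apply: dL; lra.
have h3 : is_derive (ln (1 + x)) 1 (@ln R) (ln (1 + x))^-1.
  by apply: is_derive1_ln; apply: ln_gt0; lra.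
have h4 := @is_derive1_comp R (@ln R) (fun z => @ln R (1 + z)) x _ _ h3 h2.
have h5 := is_deriveZ b (is_derive1_ln x0).
have := is_deriveB h4 h5.
rewrite /Gf /Gd => H; apply: (is_derive_eq H).
by rewrite /GRing.scale /=.
Qed.
End H.

Theorem proposition2 (R : realType) (gl gl1 : R) :
  0 < gl -> gl < gl1 ->
  (forall g : R, 0 <= g <= gl -> phi gl gl1 g >= log2 (1 + g)) /\
  (forall g : R, gl <= g <= gl1 -> phi gl gl1 g <= log2 (1 + g)) /\
  (forall g : R, gl1 < g -> phi gl gl1 g > log2 (1 + g)).
Proof.
move=> gl0 glgl1.
have gl10 : 0 < gl1 by exact: lt_trans gl0 glgl1.
have ln2 : 0 < ln (2 : R) by apply: ln_gt0; lra.
have Lpos (g : R) : 0 < g -> 0 < ln (1 + g) by move=> g0; apply: ln_gt0; lra.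
have lnlog2 (g : R) : 0 < g -> ln (log2 (1 + g)) = ln (ln (1 + g)) - ln (ln 2).
  by move=> g0; rewrite /log2 ln_div // posrE ?Lpos.
have log2pos (g : R) : 0 < g -> 0 < log2 (1 + g) by move=> g0; rewrite /log2 divr_gt0 ?Lpos.
set b := b_coef gl gl1.
have lnd : 0 < ln gl1 - ln gl by rewrite subr_gt0 ltr_ln ?posrE.
have hb : b * (ln gl1 - ln gl) = ln (ln (1 + gl1)) - ln (ln (1 + gl)).
  rewrite /b /b_coef !lnlog2 // divfK ?gt_eqF //; ring.
have Geq : Gf b gl1 = Gf b gl.
  rewrite /Gf; apply/eqP; rewrite -subr_eq0; apply/eqP.
  have -> : ln (ln (1 + gl1)) - b * ln gl1 - (ln (ln (1 + gl)) - b * ln gl) =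
    (ln (ln (1 + gl1)) - ln (ln (1 + gl))) - b * (ln gl1 - ln gl) by ring.
  by rewrite hb subrr.
have bpos : 0 < b.
  have : 0 < b * (ln gl1 - ln gl).
    rewrite hb subr_gt0 ltr_ln ?posrE ?Lpos //.
    rewrite ltr_ln ?posrE; lra.
  by rewrite pmulr_lgt0.
have phiE (g : R) : 0 < g -> phi gl gl1 g = log2 (1 + g) * expR (Gf b gl1 - Gf b g).
  move=> g0; rewrite /phi /a_coef -/b /powR gt_eqF // -[in RHS](lnK (log2pos g g0)).
  rewrite -!expRD; congr expR; rewrite !lnlog2 // /Gf; ring.
have dGI : forall z, z \in `]gl, gl1[ -> is_derive z 1 (Gf b) (Gd b z).
  by move=> z; rewrite in_itv /= => /andP[h _]; apply: dG; exact: lt_trans gl0 h.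
have [xi xiI Exi] : exists2 c, c \in `]gl, gl1[%R & Gf b gl1 - Gf b gl = Gd b c * (gl1 - gl).
  apply: MVT => //.
  apply: derivable_within_continuous => z; rewrite in_itv /= => /andP[h _].
  by case: (dG b z (lt_le_trans gl0 h)).
move: xiI; rewrite in_itv /= => /andP[glxi xigl1].
have xi0 : 0 < xi by exact: lt_trans gl0 glxi.
have Gd0 : Gd b xi = 0.
  move: Exi; rewrite Geq subrr => /esym/eqP; rewrite mulf_eq0.
  by case/orP => /eqP // h; lra.
have hbxi : b = xi / ((1 + xi) * ln (1 + xi)).
  move: Gd0; rewrite /Gd => /eqP; rewrite subr_eq0 => /eqP E.
  have := congr1 (fun t => t * xi) E; rewrite /= divfK ?gt_eqF // => <-.
  have := Lpos xi xi0; move=> lx.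
  field; rewrite ?gt_eqF //; lra.
have key (z : R) : 0 < z -> Gd b z = (mf xi - mf z) / (z * mf z * mf xi).
  move=> z0; have lz := Lpos z z0; have lx := Lpos xi xi0.
  rewrite hbxi /Gd /mf; field.
  by rewrite !gt_eqF //; lra.
have Gpos (z : R) : 0 < z -> z < xi -> 0 < Gd b z.
  move=> z0 zxi; rewrite key //; apply: divr_gt0; first by rewrite subr_gt0 mf_incr.
  by apply: mulr_gt0; [apply: mulr_gt0 => //; exact: mf_gt0 | exact: mf_gt0].
have Gneg (z : R) : xi < z -> Gd b z < 0.
  move=> xiz; have z0 : 0 < z by exact: lt_trans xi0 xiz.
  have dp : 0 < z * mf z * mf xi.
    by apply: mulr_gt0; [apply: mulr_gt0 => //; exact: mf_gt0 | exact: mf_gt0].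
  by rewrite key // pmulr_llt0 ?invr_gt0 // subr_lt0 mf_incr.
have Ginc (x y : R) : 0 < x -> x < y -> y <= xi -> Gf b x < Gf b y.
  move=> x0 xy yxi; apply: (@incr_pos _ (Gf b) (Gd b) x xi) => //.
    by move=> z z0; exact: dG.
  by move=> z /andP[xz zxi]; apply: Gpos => //; exact: lt_trans x0 xz.
have Gdec (x y : R) : xi <= x -> x < y -> Gf b y < Gf b x.
  move=> xix xy; apply: (@decr_pos _ (Gf b) (Gd b) xi y) => //.
    by move=> z z0; exact: dG.
  by move=> z /andP[xz zxi]; apply: Gneg.
have geE (g : R) : 0 < g -> (log2 (1 + g) <= phi gl gl1 g) = (Gf b g <= Gf b gl1).
  by move=> g0; rewrite phiE // ler_pMr ?log2pos // leNgt expR_lt1 -leNgt subr_ge0.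
have leE (g : R) : 0 < g -> (phi gl gl1 g <= log2 (1 + g)) = (Gf b gl1 <= Gf b g).
  by move=> g0; rewrite phiE // ger_pMr ?log2pos // expR_le1 subr_le0.
have ltE (g : R) : 0 < g -> (log2 (1 + g) < phi gl gl1 g) = (Gf b g < Gf b gl1).
  by move=> g0; rewrite phiE // ltr_pMr ?log2pos // expR_gt1 subr_gt0.
split; [|split].
- move=> g /andP[g0 ggl]; rewrite le_eqVlt in g0; case/orP: g0 => [/eqP <-| gp].
    by rewrite /phi powR0 ?gt_eqF // mulr0 addr0 /log2 ln1 mul0r.
  rewrite geE // Geq; rewrite le_eqVlt in ggl; case/orP: ggl => [/eqP -> //| h].
  exact/ltW/(Ginc _ _ gp h (ltW glxi)).
- move=> g /andP[h1 h2]; have gp : 0 < g by exact: lt_le_trans gl0 h1.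
  rewrite leE //; case: (lerP g xi) => hx.
    rewrite Geq; rewrite le_eqVlt in h1; case/orP: h1 => [/eqP -> //| h].
    exact/ltW/(Ginc _ _ gl0 h hx).
  rewrite le_eqVlt in h2; case/orP: h2 => [/eqP -> //| h].
  exact/ltW/(Gdec _ _ (ltW hx) h).
- move=> g h; have gp : 0 < g by exact: lt_trans gl10 h.
  by rewrite ltE //; apply: Gdec (ltW xigl1) h.
Qed.
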